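(* Let $\mu$ be a log-concave probability measure on $\mathbb R^n$ and let $\psi:\mathbb R^n\to\mathbb R$ be a convex map with $\psi\in L_1(\mu)$. Let $Z\sim\mu$, $F(t)=\mathbb P(\psi(Z)\leqslant t)$, $t\in\mathbb R$, and $f=F'$. Then $$f(m)\geqslant\frac{1}{32\,\|(\psi-m)_+\|_{L_1(\mu)}},$$ where $m$ is a median of $\psi$ with respect to $\mu$.
   Context: $(x)_+=\max\{x,0\}$. *)

(* Defs.v *)
From HB Require Import structures.
From mathcomp Require Import all_boot all_order all_algebra.
From mathcomp Require Import all_classical all_reals all_analysis.
Set Implicit Arguments. Unset Strict Implicit. Unset Printing Implicit Defensive.
Import Order.TTheory GRing.Theory Num.Theory.
Import numFieldNormedType.Exports.
Local Open Scope classical_set_scope.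
Local Open Scope ring_scope.

Definition borelRV (R : realType) (n : nat) :=
  g_sigma_algebraType (@open 'rV[R]_n).

Definition mink_comb (R : realType) (n : nat) (l : R)
    (A B : set 'rV[R]_n) : set 'rV[R]_n :=
  [set z | exists a b, A a /\ B b /\ z = l *: a + (1 - l) *: b].

Definition log_concave (R : realType) (n : nat)
    (mu : probability (borelRV R n) R) : Prop :=
  forall (A B : set 'rV[R]_n) (l : R), compact A -> compact B ->
    0 < l < 1 ->
    fine (mu A) `^ l * fine (mu B) `^ (1 - l)
      <= fine (mu (mink_comb l A B : set (borelRV R n))).

Definition convex_fun (R : realType) (n : nat) (psi : 'rV[R]_n -> R) : Prop :=
  forall (x y : 'rV[R]_n) (l : R), 0 <= l <= 1 ->
    psi (l *: x + (1 - l) *: y) <= l * psi x + (1 - l) * psi y.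

Definition distrF (R : realType) (n : nat) (mu : probability (borelRV R n) R)
    (psi : 'rV[R]_n -> R) (t : R) : R :=
  fine (mu ([set x | psi x <= t] : set (borelRV R n))).

Definition is_median (R : realType) (n : nat) (mu : probability (borelRV R n) R)
    (psi : 'rV[R]_n -> R) (m : R) : Prop :=
  ((2^-1)%:E <= mu ([set x | (psi x <= m)%R] : set (borelRV R n)))%E /\
  ((2^-1)%:E <= mu ([set x | (m <= psi x)%R] : set (borelRV R n)))%E.

Definition L1_pos_part (R : realType) (n : nat) (mu : probability (borelRV R n) R)
    (psi : 'rV[R]_n -> R) (m : R) : R :=
  fine (\int[mu]_(x in [set: borelRV R n]) (Num.max (psi x - m) 0)%:E)%E.

(* Main.v *)
Require Import Defs.
From HB Require Import structures.
From mathcomp Require Import all_boot all_order all_algebra.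
From mathcomp Require Import all_classical all_reals all_analysis.
From mathcomp Require Import ring lra.
Import Order.TTheory GRing.Theory Num.Theory.
Import numFieldNormedType.Exports.
Local Open Scope classical_set_scope.
Local Open Scope ring_scope.
Set Implicit Arguments. Unset Strict Implicit.


Lemma ln_ge_aux (R : realType) (y : R) : 0 < y -> 1 - y^-1 <= ln y.
Proof.
move=> y0.
have hy : -1 < y^-1 - 1 by have := invr_gt0 y; rewrite y0; lra.
have := le_ln1Dx hy.
rewrite addrC subrK lnV ?posrE //.
lra.
Qed.

Lemma key_aux (R : realType) (q p u : R) : 0 < u -> u <= 1/16 -> 3/4 < q ->
  1/2 - u < p ->
  q `^ (8*u/(1+8*u)) * p `^ (1 - 8*u/(1+8*u)) <= 1/2 -> False.
Proof.
move=> u0 u16 q34 pu.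
set l := 8*u/(1+8*u).
have q0 : 0 < q by lra.
have p0 : 0 < p by lra.
have hl : l * (1 + 8*u) = 8*u by rewrite /l mulfVK //; lra.
rewrite /powR (negbTE (lt0r_neq0 q0)) (negbTE (lt0r_neq0 p0)) -expRD => H.
have h2 : (0:R) < 1/2 by lra.
move: H; rewrite -ler_ln ?posrE ?expR_gt0 // expRK.
have lq : ln q = ln (1/2) + ln (2 * q).
  by rewrite -lnM ?posrE; [congr ln; field|lra|lra].
have lp : ln p = ln (1/2) + ln (2 * p).
  by rewrite -lnM ?posrE; [congr ln; field|lra|lra].
rewrite lq lp => H2.
have HA := @ln_ge_aux R (2 * q); have HB := @ln_ge_aux R (2 * p).
have {HA} HA : 1/3 <= ln (2 * q).
  apply: le_trans (HA _); last by lra.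
  have i1 : (2 * q)^-1 * (2 * q) = 1 by rewrite mulVf //; lra.
  have i0 : 0 < (2 * q)^-1 by rewrite invr_gt0; lra.
  nra.
have {HB} HB : -2*u <= ln (2 * p) * (1 - 2*u).
  have := HB ltac:(lra).
  have i1 : (2 * p)^-1 * (2 * p) = 1 by rewrite mulVf //; lra.
  have i0 : 0 < (2 * p)^-1 by rewrite invr_gt0; lra.
  nra.
set A := ln (2 * q) in HA H2; set B := ln (2 * p) in HB H2.
set C := ln (1/2) in H2.
clearbody l A B C.
have H2' : l * A + (1 - l) * B <= 0 by lra.
have H3 : 8*u*A + B <= 0.
  have : (1+8*u) * (l * A + (1 - l) * B) <= 0.
    apply: mulr_ge0_le0; lra.
  have -> : (1+8*u) * (l * A + (1 - l) * B) = (l * (1+8*u)) * A + (1 + 8*u - l*(1+8*u)) * B by ring.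
  rewrite hl; lra.
have HB2 : B <= -8*u/3 by nra.
have HB3 : B * (1 - 2*u) <= -8*u/3 * (1 - 2*u).
  by apply: ler_wpM2r; lra.
have : u * (1/16 - u) >= 0 by apply: mulr_ge0; lra.
nra.
Qed.


Lemma deriv_est (R : realType) (F : R -> R) m : derivable F m 1 ->
  forall e, 0 < e -> exists2 d, 0 < d & forall h, h != 0 -> `|h| < d ->
  `|F (h + m) - F m - h * derive1 F m| <= e * `|h|.
Proof.
move=> dF e e0.
have H : (fun h : R => h^-1 *: ((F \o shift m) (h *: 1) - F m)) @ 0^' --> 'D_1 F m := dF.
rewrite derive1E.
move/cvgrPdist_le : H => /(_ e e0) /nbhs_normP [d d0 Hd].
exists d => // h h0 hd.
have := Hd h; rewrite /ball_ /= sub0r normrN => /(_ hd h0) /=.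
rewrite -[h%:A]/(h * 1) mulr1 -[h^-1 *: _]/(h^-1 * _) => Hh.
have -> : F (h + m) - F m - h * 'D_1 F m = - h * ('D_1 F m - h^-1 * (F (h + m) - F m)).
  by field.
rewrite normrM normrN mulrC; apply: ler_wpM2r => //.
Qed.



Lemma norm_entry (R : realType) n (u : 'rV[R]_n) i : `|u 0 i| <= `|u|.
Proof.
rewrite -[`|u|]/(mx_norm u) mx_normrE; apply/bigmax_geP; right => /=.
by exists (0, i).
Qed.

Lemma cvx1 (R : realType) n (psi : 'rV[R]_n -> R) : convex_fun psi ->
  forall x v c, `|c| <= 1 -> psi (x + c *: v) <= Num.max (psi (x + v)) (psi (x - v)).
Proof.
move=> cv x v c hc.
have [hc1 hc2] : -1 <= c /\ c <= 1 by move: hc; rewrite ler_norml => /andP[].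
set l := (1 + c) / 2.
have -> : x + c *: v = l *: (x + v) + (1 - l) *: (x - v).
  by apply/rowP => j; rewrite !mxE /l; field.
apply: le_trans (cv _ _ _ _) _; first by apply/andP; split; rewrite /l; lra.
set M := Num.max _ _.
have h1 : psi (x + v) <= M by rewrite le_max lexx.
have h2 : psi (x - v) <= M by rewrite le_max lexx orbT.
have : 0 <= l <= 1 by apply/andP; split; rewrite /l; lra.
move=> /andP[l0 l1].
nra.
Qed.

Lemma jensen_avg (R : realType) n (psi : 'rV[R]_n -> R) : convex_fun psi ->
  forall N (p : 'I_N.+1 -> 'rV[R]_n),
  psi (N.+1%:R^-1 *: \sum_i p i) <= N.+1%:R^-1 * \sum_i psi (p i).
Proof.
move=> cv; elim=> [|N IH] p.
  by rewrite !big_ord1 invr1 scale1r mul1r.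
rewrite big_ord_recr [X in _ <= _ * X]big_ord_recr /=.
set S := \sum_(i < N.+1) p _.
set T := \sum_(i < N.+1) psi _.
have a0 : (N.+1%:R : R) != 0 by rewrite pnatr_eq0.
have b0 : (N.+2%:R : R) != 0 by rewrite pnatr_eq0.
have ab : (N.+2%:R : R) = N.+1%:R + 1 by rewrite -natr1.
set l := (N.+1%:R : R) / N.+2%:R.
have h1 : (1 + N%:R : R) != 0 by apply: lt0r_neq0; have := ler0n R N; lra.
have h2 : (2 + N%:R : R) != 0 by apply: lt0r_neq0; have := ler0n R N; lra.
have -> : N.+2%:R^-1 *: (S + p ord_max) =
    l *: (N.+1%:R^-1 *: S) + (1 - l) *: p ord_max.
  by rewrite scalerA scalerDr; congr (_ *: _ + _ *: _); rewrite /l; field; rewrite ?h1 ?h2.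
have l01 : 0 <= l <= 1.
  rewrite /l; apply/andP; split; first by rewrite divr_ge0.
  by rewrite ler_pdivrMr ?ltr0n // mul1r ler_nat.
apply: le_trans (cv _ _ _ l01) _.
have := IH (fun i => p (widen_ord (leqnSn N.+1) i)); rewrite -/S -/T => H.
have -> : N.+2%:R^-1 * (T + psi (p ord_max)) =
   l * (N.+1%:R^-1 * T) + (1 - l) * psi (p ord_max).
  by rewrite /l; field; rewrite ?h1 ?h2.
move/andP: l01 => [l0 l1].
by apply: lerD; [apply: ler_wpM2l|].
Qed.

Lemma cvx_bound (R : realType) n (psi : 'rV[R]_n -> R) : convex_fun psi ->
  forall x, exists M, forall u, `|u| <= 1 -> psi (x + u) <= M.
Proof.
move=> cv x; case: n psi cv x => [|N] psi cv x.
  by exists (psi x) => u _; rewrite [u]thinmx0 addr0.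
set v := fun i : 'I_N.+1 => N.+1%:R *: ('e_i : 'rV[R]_N.+1).
exists (\sum_i (`|psi (x + v i)| + `|psi (x - v i)|)) => u hu.
set M := \sum_i _.
have -> : x + u = N.+1%:R^-1 *: \sum_i (x + u 0 i *: v i).
  rewrite big_split /= sumr_const card_ord -[x *+ N.+1]scaler_nat.
  have -> : \sum_i u 0 i *: v i = N.+1%:R *: u.
    rewrite [in RHS](row_sum_delta u) scaler_sumr; apply: eq_bigr => i _.
    by rewrite /v !scalerA mulrC.
  by rewrite scalerDr !scalerA mulVf ?pnatr_eq0 // !scale1r.
apply: le_trans (@jensen_avg R N.+1 psi cv N (fun i => x + u 0 i *: v i)) _.
have HM : forall i, psi (x + u 0 i *: v i) <= M.
  move=> i; have hc : `|u 0 i| <= 1 := le_trans (norm_entry u i) hu.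
  apply: le_trans (cvx1 cv x (v i) hc) _.
  rewrite ge_max; apply/andP; split.
  - rewrite /M (bigD1 i) //=; apply: le_trans (ler_norm _) _.
    have s0 : 0 <= \sum_(i0 < N.+1 | i0 != i) (`|psi (x + v i0)| + `|psi (x - v i0)|).
      by apply: sumr_ge0 => j _; apply: addr_ge0.
    have := normr_ge0 (psi (x - v i)); lra.
  - rewrite /M (bigD1 i) //=; apply: le_trans (ler_norm _) _.
    have s0 : 0 <= \sum_(i0 < N.+1 | i0 != i) (`|psi (x + v i0)| + `|psi (x - v i0)|).
      by apply: sumr_ge0 => j _; apply: addr_ge0.
    have := normr_ge0 (psi (x + v i)); lra.
apply: le_trans (_ : N.+1%:R^-1 * \sum_(i < N.+1) M <= M).
  by apply: ler_wpM2l; [rewrite invr_ge0 ler0n | apply: ler_sum => i _; exact: HM].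
by rewrite sumr_const card_ord -[M *+ _]mulr_natl mulKf ?pnatr_eq0.
Qed.

Lemma cvx_lsc (R : realType) n (psi : 'rV[R]_n -> R) : convex_fun psi ->
  forall x M, (forall u, `|u| <= 1 -> psi (x + u) <= M) ->
  forall e u, 0 < e -> e <= 1 -> `|u| <= e -> psi x - e * (M - psi x) <= psi (x + u).
Proof.
move=> cv x M HM e u e0 e1 hu.
set v := - (e^-1 *: u).
have hv : `|v| <= 1.
  rewrite normrN normrZ ger0_norm; last by rewrite invr_ge0 ltW.
  by rewrite mulrC ler_pdivrMr // mul1r.
set l := (1 + e)^-1.
have e10 : 1 + e != 0 by apply: lt0r_neq0; lra.
have ee : e != 0 by apply: lt0r_neq0.
have hx : x = l *: (x + u) + (1 - l) *: (x + v).
  by apply/rowP => j; rewrite !mxE /l; field; rewrite e10 ee.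
have l01 : 0 <= l <= 1.
  apply/andP; split; first by rewrite /l invr_ge0; lra.
  by rewrite /l invf_le1; lra.
have H := cv (x + u) (x + v) l l01; rewrite -hx in H.
have Hv := HM v hv.
move/andP: l01 => [l0 l1].
have H2 : (1 + e) * psi x <= (1 + e) * (l * psi (x + u) + (1 - l) * psi (x + v)).
  by apply: ler_wpM2l => //; lra.
have H3 : (1 + e) * (l * psi (x + u) + (1 - l) * psi (x + v)) =
  psi (x + u) + e * psi (x + v) by rewrite /l; field.
rewrite H3 in H2.
have : e * psi (x + v) <= e * M by apply: ler_wpM2l => //; lra.
lra.
Qed.

Lemma cvx_closed (R : realType) n (psi : 'rV[R]_n -> R) : convex_fun psi ->
  forall t, closed [set x | psi x <= t].
Proof.
move=> cv t.
rewrite -[X in closed X]setCK; apply: open_closedC.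
rewrite openE => x /= Hx.
have gt : t < psi x by rewrite ltNge; apply/negP.
have [M HM] := cvx_bound cv x.
have D0 : 0 <= M - psi x by have := HM 0; rewrite normr0 addr0 => /(_ ler01); lra.
set D := M - psi x in D0.
set g := psi x - t.
have g0 : 0 < g by rewrite /g; lra.
set e := Num.min 1 (g / (2 * D + 2)).
have e0 : 0 < e by rewrite /e lt_min ltr01 /= divr_gt0 //; lra.
have e1 : e <= 1 by rewrite /e ge_min lexx.
have eD : e * D < g.
  apply: (@le_lt_trans _ _ (g / (2 * D + 2) * D)).
    by apply: ler_wpM2r => //; rewrite /e ge_min lexx orbT.
  rewrite mulrAC ltr_pdivrMr; last lra.
  nra.
rewrite /interior; apply/nbhs_ballP; exists e => // y /=.
rewrite mx_norm_ball /ball_ /= => hy.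
have hu : `|y - x| <= e by rewrite distrC; exact: ltW.
have := cvx_lsc cv HM e0 e1 hu.
have -> : x + (y - x) = y by rewrite addrC subrK.
move=> H Hy; rewrite /D /g in eD; lra.
Qed.



Lemma closed_meas (R : realType) n (A : set 'rV[R]_n) : closed A ->
  measurable (A : set (borelRV R n)).
Proof.
move=> cA; rewrite -(setCK A); apply: measurableC.
by apply: sub_sigma_algebra; exact: closed_openC.
Qed.

Lemma mink_compact (R : realType) n (l : R) (A B : set 'rV[R]_n) :
  compact A -> compact B -> compact (mink_comb l A B).
Proof.
move=> cA cB.
have -> : mink_comb l A B =
  [set (fun p : 'rV[R]_n * 'rV[R]_n => l *: p.1 + (1 - l) *: p.2) p | p in A `*` B].
  apply/seteqP; split => z.
    by move=> [a [b [Aa [Bb ->]]]]; exists (a, b).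
  by move=> [[a b] [/= Aa Bb] <-]; exists a, b.
apply: continuous_compact; last exact: compact_setX.
apply: continuous_subspaceT => p.
apply: (@continuousD _ _ _ (fun p : 'rV[R]_n * 'rV[R]_n => l *: p.1) (fun p => (1 - l) *: p.2)).
  apply: (@continuousZl_tmp _ _ _ (fun p : 'rV[R]_n * 'rV[R]_n => p.1)); exact: cvg_fst.
apply: (@continuousZl_tmp _ _ _ (fun p : 'rV[R]_n * 'rV[R]_n => p.2)); exact: cvg_snd.
Qed.

Lemma compact_meas (R : realType) n (A : set 'rV[R]_n) : compact A ->
  measurable (A : set (borelRV R n)).
Proof.
move=> cA; apply: closed_meas; apply: compact_closed => //.
Qed.

Lemma cball_compact (R : realType) n (K : set 'rV[R]_n) (k : nat) : closed K ->
  compact (K `&` closed_ball 0 k.+1%:R).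
Proof.
move=> cK; apply: bounded_closed_compact; last first.
  by apply: closedI => //; exact: closed_ball_closed.
exists k.+1%:R; split; first by rewrite realE ler0n.
move=> M hM x [_]; rewrite closed_ballE ?ltr0n // /closed_ball_ /= sub0r normrN => hx.
by apply: le_trans hx (ltW hM).
Qed.

Lemma muE (R : realType) n (mu : probability (borelRV R n) R) (A : set (borelRV R n)) :
  measurable A -> mu A = (fine (mu A))%:E.
Proof. by move=> mA; rewrite fineK // fin_num_measure. Qed.

Lemma mu_le (R : realType) n (mu : probability (borelRV R n) R) (A B : set (borelRV R n)) :
  measurable A -> measurable B -> A `<=` B -> fine (mu A) <= fine (mu B).
Proof.
move=> mA mB AB; rewrite -lee_fin -!muE //.
by apply: le_measure => //; rewrite inE.
Qed.

Lemma mu_01 (R : realType) n (mu : probability (borelRV R n) R) (A : set (borelRV R n)) :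
  measurable A -> 0 <= fine (mu A) <= 1.
Proof.
move=> mA; apply/andP; split; rewrite -lee_fin -muE //.
exact: probability_le1.
Qed.

Lemma approx (R : realType) n (mu : probability (borelRV R n) R) (K : set 'rV[R]_n) a :
  closed K -> a < fine (mu K) -> exists k0, forall k, (k0 <= k)%N ->
  a < fine (mu (K `&` closed_ball 0 k.+1%:R)).
Proof.
move=> cK aK.
set Cs := fun k : nat => (K `&` closed_ball 0 k.+1%:R : set (borelRV R n)).
have mC k : measurable (Cs k).
  by apply: closed_meas; apply: closedI => //; exact: closed_ball_closed.
have mK : measurable (K : set (borelRV R n)) by exact: closed_meas.
have UC : \bigcup_k Cs k = K.
  apply/seteqP; split => [x [k _ []] //|x Kx].
  exists (Num.trunc `|x|) => //; split => //.
  rewrite closed_ballE ?ltr0n // /closed_ball_ /= sub0r normrN.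
  exact: ltW (truncnS_gt _).
have nd : nondecreasing_seq Cs.
  move=> i j ij; apply/subsetPset => x [Kx]; rewrite /Cs !closed_ballE ?ltr0n // /closed_ball_ /= => hx.
  split => //; apply: le_trans hx _; by rewrite ler_nat.
have mU : measurable (\bigcup_k Cs k) by rewrite UC.
have H := nondecreasing_cvg_mu mC mU nd.
rewrite UC in H.
have : nbhs (mu K) [set y | (a%:E < y)%E].
  apply: open_nbhs_nbhs; split; first exact: open_ereal_gt_ereal.
  by rewrite /= muE // lte_fin.
move=> /H [k0 _ Hk]; exists k0 => k hk.
by have := Hk k hk; rewrite /= muE // lte_fin.
Qed.

Unset Implicit Arguments.

Theorem lemma5p4 (R : realType) (n : nat) (mu : probability (borelRV R n) R)
    (psi : 'rV[R]_n -> R) (m : R) :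
  log_concave mu ->
  convex_fun psi ->
  mu.-integrable [set: borelRV R n] (fun x => (psi x)%:E) ->
  is_median mu psi m ->
  derivable (distrF mu psi) m 1 ->
  1 / (32 * L1_pos_part mu psi m) <= derive1 (distrF mu psi) m.
Proof.
move=> hlc hcv hint hmed hder.
have mpsi : measurable_fun [set: borelRV R n] psi.
  by apply/measurable_realfun.measurable_EFinP; exact: (measurable_int mu hint).
have mK : forall t, measurable ([set x | psi x <= t] : set (borelRV R n)).
  move=> t; have := mpsi measurableT _ (measurable_itv `]-oo, t]).
  rewrite setTI; congr measurable; apply/seteqP; split => x /=;
    by rewrite in_itv /=.
have mG : measurable ([set x | m <= psi x] : set (borelRV R n)).
  have := mpsi measurableT _ (measurable_itv `[m, +oo[).
  rewrite setTI; congr measurable; apply/seteqP; split => x /=;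
    by rewrite in_itv /= andbT.
have cK t : closed [set x : 'rV[R]_n | psi x <= t] := @cvx_closed _ _ _ hcv t.
set F := distrF mu psi.
have Fmono : forall s t, s <= t -> F s <= F t.
  move=> s t st; apply: mu_le => // x /= hx; exact: le_trans hx st.
have c_ge : 2^-1 <= F m.
  by have := hmed.1; rewrite (muE mu (mK m)) lee_fin.
have Fle_half : forall h, 0 < h -> F (m - h) <= 2^-1.
  move=> h h0.
  have disj : [set x | psi x <= m - h] `&` [set x | m <= psi x] = set0.
    apply/seteqP; split => x //= [h1 h2]; lra.
  have U := measureU mu (mK (m - h)) mG disj.
  have mU : measurable ([set x | psi x <= m - h] `|` [set x | m <= psi x] : set (borelRV R n)).
    by apply: measurableU.
  have : fine (mu [set x | psi x <= m - h]) + fine (mu [set x | m <= psi x]) <= 1.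
    rewrite -lee_fin EFinD -(muE mu (mK (m - h))) -(muE mu mG) -U.
    exact: probability_le1.
  have := hmed.2; rewrite (muE mu mG) lee_fin.
  rewrite /F /distrF; lra.
have hD := deriv_est hder.
set f := derive1 F m.
have c_le : F m <= 2^-1.
  apply/ler_addgt0Pr => e e0.
  have [d d0 Hd] := hD 1 ltr01.
  have fa : 0 < `|f| + 1 by have := normr_ge0 f; lra.
  set eta := Num.min (d / 2) (e / (`|f| + 1)).
  have eta0 : 0 < eta by rewrite /eta lt_min !divr_gt0 //.
  have etad : eta < d.
    have : eta <= d / 2 by rewrite /eta ge_min lexx.
    lra.
  have := Hd (- eta) _ _.
  rewrite normrN (gtr0_norm eta0) mul1r => /(_ _ etad).
  have -> : (- eta != 0) by rewrite oppr_eq0 lt0r_neq0.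
  move=> /(_ isT); rewrite ler_norml => /andP[H1 H2].
  rewrite -/F -/f (addrC (- eta) m) in H1 H2.
  have := Fle_half eta eta0.
  have B1 : eta * f <= eta * `|f| by apply: ler_wpM2l; [exact: ltW|exact: ler_norm].
  have B2 : eta * (`|f| + 1) <= e.
    rewrite -ler_pdivlMr //.
    by rewrite /eta ge_min lexx orbT.
  nra.
have c_eq : F m = 2^-1 by apply/eqP; rewrite eq_le c_le c_ge.
apply/ler_addgt0Pr => e e0.
have e20 : 0 < e / 2 by rewrite divr_gt0.
have [d d0 Hd] := hD (e / 2) e20.
have Hd' : forall h, 0 < h -> h < d -> F m - h * f - e / 2 * h <= F (m - h).
  move=> h h0 hd.
  have := Hd (- h) _ _.
  rewrite normrN (gtr0_norm h0) => /(_ _ hd).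
  have -> : (- h != 0) by rewrite oppr_eq0 lt0r_neq0.
  move=> /(_ isT); rewrite ler_norml => /andP[H1 H2].
  rewrite -/F -/f (addrC (- h) m) in H1 H2.
  lra.
have fpos : 0 <= f + e / 2.
  have d20 : 0 < d / 2 by rewrite divr_gt0.
  have d2d : d / 2 < d by lra.
  have H := Hd' (d / 2) d20 d2d.
  have H2 := Fmono (m - d / 2) m ltac:(lra).
  have : 0 <= d / 2 * (f + e / 2) by lra.
  by rewrite pmulr_rge0.
set g := f + e.
have g0 : 0 < g by rewrite /g; lra.
set h := Num.min (d / 2) (1 / (16 * g)).
have h0 : 0 < h by rewrite /h lt_min !divr_gt0 //; lra.
have hd : h < d.
  have : h <= d / 2 by rewrite /h ge_min lexx.
  lra.
have hg : g * h <= 1 / 16.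
  have : h <= 1 / (16 * g) by rewrite /h ge_min lexx orbT.
  rewrite ler_pdivlMr; last lra.
  lra.
set u := g * h.
have u0 : 0 < u by rewrite /u mulr_gt0.
have Hp : 2^-1 - u < F (m - h).
  have := Hd' h h0 hd; rewrite c_eq /u /g.
  have : 0 < e / 2 * h by rewrite mulr_gt0.
  lra.
set t := m + 1 / (8 * g).
have tm : t - m = 1 / (8 * g) by rewrite /t; ring.
have Ft : F t <= 3 / 4.
  rewrite leNgt; apply/negP => Hq.
  have [k1 Hk1] := approx (cK t) Hq.
  have [k2 Hk2] := approx (cK (m - h)) Hp.
  set k := maxn k1 k2.
  have qA := Hk1 k (leq_maxl _ _).
  have pB := Hk2 k (leq_maxr _ _).
  set A := [set x | psi x <= t] `&` closed_ball 0 k.+1%:R in qA.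
  set B := [set x | psi x <= m - h] `&` closed_ball 0 k.+1%:R in pB.
  have cA : compact A := @cball_compact _ _ _ k (cK t).
  have cB : compact B := @cball_compact _ _ _ k (cK (m - h)).
  set l := 8 * u / (1 + 8 * u).
  have u8 : 1 + 8 * u != 0 by apply: lt0r_neq0; lra.
  have l01 : 0 < l < 1.
    apply/andP; split; first by rewrite /l divr_gt0 //; lra.
    by rewrite /l ltr_pdivrMr; lra.
  have LC := hlc A B l cA cB l01.
  have lt : l * t + (1 - l) * (m - h) = m.
    rewrite /l /t /u; field.
    by rewrite -/u u8 (lt0r_neq0 g0).
  have sub : mink_comb l A B `<=` [set x | psi x <= m].
    move=> z [a [b [[ha _] [[hb _] ->]]]]; rewrite /=.
    move/andP: l01 => [l0 l1].
    have l01' : 0 <= l <= 1 by apply/andP; split; lra.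
    apply: le_trans (hcv a b l l01') _.
    rewrite -[X in _ <= X]lt.
    apply: lerD; apply: ler_wpM2l => //; lra.
  have := mu_le mu (compact_meas (@mink_compact _ _ l _ _ cA cB)) (mK m) sub.
  rewrite -/(distrF mu psi m) -/F c_eq => H.
  have H' : fine (mu A) `^ l * fine (mu B) `^ (1 - l) <= 1 / 2.
    by rewrite div1r; exact: le_trans LC H.
  apply: (@key_aux R (fine (mu A)) (fine (mu B)) u u0 hg) => //.
  by rewrite div1r.
have mC : measurable (~` [set x | psi x <= t] : set (borelRV R n)) := measurableC (mK t).
have hC : fine (mu (~` [set x | psi x <= t] : set (borelRV R n))) = 1 - F t.
  by rewrite probability_setC // (muE mu (mK t)) -EFinB.
have mmax : measurable_fun [set: borelRV R n] (fun x => Num.max (psi x - m) 0).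
  apply: measurable_realfun.measurable_maxr; last exact: measurable_cst.
  exact: (measurable_realfun.measurable_funB mpsi (measurable_cst m)).
have integ : mu.-integrable [set: borelRV R n] (fun x => (Num.max (psi x - m) 0)%:E).
  have ic := finite_measure_integrable_cst mu m (@measurableT _ (borelRV R n)).
  have iB := integrableB measurableT hint ic.
  apply: (le_integrable measurableT _ _ iB).
    by apply/measurable_realfun.measurable_EFinP.
  move=> x _; rewrite /= lee_fin.
  rewrite ger0_norm; last by rewrite le_max lexx orbT.
  by rewrite ge_max ler_norm normr_ge0.
have Mk : (t - m) * (1 - F t) <= L1_pos_part mu psi m.
  rewrite -hC /L1_pos_part -lee_fin fineK; last exact: integrable_fin_num.
  rewrite EFinM -(muE mu mC) -[X in (_ * mu X)%E](setIT).
  rewrite -integral_indic // -ge0_integralZl_EFin //; last 2 first.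
  - by apply/measurable_realfun.measurable_EFinP; exact: measurable_realfun.measurable_indic.
  - by rewrite tm divr_ge0 //; lra.
  have tm0 : 0 <= t - m by rewrite tm divr_ge0 //; lra.
  apply: ge0_le_integral.
  - exact: measurableT.
  - by move=> x _; rewrite -EFinM lee_fin mulr_ge0 // indicE ler0n.
  - apply: emeasurable_funM; first exact: measurable_cst.
    by apply/measurable_realfun.measurable_EFinP; exact: measurable_realfun.measurable_indic.
  - by apply/measurable_realfun.measurable_EFinP.
  move=> x _; rewrite -EFinM lee_fin indicE.
  case: (boolP (x \in _)) => hx.
    rewrite mulr1 le_max; apply/orP; left.
    move/set_mem: hx => /= hx.
    have : t < psi x by rewrite ltNge; apply/negP.
    by rewrite lerD2r; apply: ltW.
  by rewrite mulr0 le_max lexx orbT.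
have Lpos : 1 / (32 * g) <= L1_pos_part mu psi m.
  apply: le_trans Mk; rewrite tm.
  have -> : 1 / (32 * g) = 1 / (8 * g) * (1 / 4) by field; apply: lt0r_neq0.
  apply: ler_wpM2l; first by rewrite divr_ge0 //; lra.
  lra.
have L0 : 0 < L1_pos_part mu psi m.
  apply: lt_le_trans Lpos; rewrite divr_gt0 //; lra.
rewrite ler_pdivrMr; last lra.
move: Lpos; rewrite ler_pdivrMr; last lra.
rewrite -/g; nra.
Qed.
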